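(* Assume $\mathbf{P.0}$ has an optimal solution, with optimal value $OPT$. Let $A^g$ be the output of the greedy algorithm on the family $\mathcal{I}$. Then $|A^g|\le b$, $\lfloor\alpha_t\rfloor\le |A^g\cap V_t|\le\lceil\beta_t\rceil$ for all $t\in[m]$, and $$f(A^g)\ge \frac{(1-1/e)^2}{2}\,OPT.$$
   Context: Let $V$ be a finite set of $n$ items and $f:2^V\to\mathbb{R}_{\ge 0}$ a non-negative monotone submodular function. Items are divided into pairwise disjoint groups $V_1,\dots,V_m$ with $V=V_1\cup\dots\cup V_m$; $\alpha,\beta\in\mathbb{R}_{\ge 0}^m$ and $b$ is a positive integer. Let $\mathcal{F}=\{S\subseteq V: |S|\le b\}$. Problem $\mathbf{P.0}$: maximize $\sum_{S\in\mathcal{F}} x_S f(S)$ over $x\in[0,1]^{\mathcal{F}}$ subject to $\alpha_t\le \sum_{S\in\mathcal{F}} x_S |S\cap V_t|\le \beta_t$ for all $t\in[m]$ and $\sum_{S\in\mathcal{F}}x_S\le 1$; $OPT$ denotes its optimal value. Let $\mathcal{I}$ be the family of sets $S\subseteq V$ such that $|S\cap V_t|\le\lceil\beta_t\rceil$ for all $t\in[m]$ and $\sum_{t\in[m]}\max\{\lfloor\alpha_t\rfloor,|S\cap V_t|\}\le b$ (this family is the set of feasible solutions of problem $\mathbf{P.3}$: maximize $f(S)$ over $S\in\mathcal{I}$). The greedy algorithm on $\mathcal{I}$: start with $S=\emptyset$; while there exists $e\in V\setminus S$ with $S\cup\{e\}\in\mathcal{I}$, add to $S$ such an $e$ maximizing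 $f(S\cup\{e\})-f(S)$ (ties broken arbitrarily); when no such $e$ exists, output $A^g=S$. *)

(* Defs.v *)
From HB Require Import structures.
From mathcomp Require Import all_boot all_order all_algebra.
From mathcomp Require Import reals.
From mathcomp Require Import sequences.
Set Implicit Arguments. Unset Strict Implicit. Unset Printing Implicit Defensive.
Import Order.TTheory GRing.Theory Num.Theory.
Local Open Scope ring_scope.

Section Defs.
Variables (R : realType) (V : finType) (m : nat).

Definition nonneg_fun (f : {set V} -> R) := forall S, 0 <= f S.
Definition monotone_fun (f : {set V} -> R) :=
  forall A B : {set V}, A \subset B -> f A <= f B.
Definition submodular_fun (f : {set V} -> R) :=
  forall A B : {set V}, f (A :|: B) + f (A :&: B) <= f A + f B.

(* groups V_1..V_m given by a labelling grp : V -> 'I_m (a partition of V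
   into pairwise disjoint, possibly empty, groups) *)
Definition group_of (grp : V -> 'I_m) (t : 'I_m) : {set V} :=
  [set v | grp v == t].

(* Feasibility of x for problem P.0 (variables indexed by F = {S : |S| <= b};
   values of x outside F are irrelevant) *)
Definition P0_feasible (grp : V -> 'I_m) (alpha beta : 'I_m -> R) (b : nat)
  (x : {set V} -> R) : Prop :=
  [/\ (forall S : {set V}, (#|S| <= b)%N -> 0 <= x S <= 1),
      (forall t : 'I_m,
          alpha t <= \sum_(S : {set V} | (#|S| <= b)%N) x S * (#|S :&: group_of grp t|)%:R
          <= beta t)
    & \sum_(S : {set V} | (#|S| <= b)%N) x S <= 1].

Definition P0_value (f : {set V} -> R) (b : nat) (x : {set V} -> R) : R :=
  \sum_(S : {set V} | (#|S| <= b)%N) x S * f S.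

Definition P0_optimal (f : {set V} -> R) (grp : V -> 'I_m) (alpha beta : 'I_m -> R)
  (b : nat) (x : {set V} -> R) : Prop :=
  P0_feasible grp alpha beta b x /\
  forall y, P0_feasible grp alpha beta b y -> P0_value f b y <= P0_value f b x.

Definition in_I (grp : V -> 'I_m) (alpha beta : 'I_m -> R) (b : nat) (S : {set V}) : Prop :=
  (forall t : 'I_m, (#|S :&: group_of grp t|%:Z <= Num.ceil (beta t))%R) /\
  (\sum_(t < m) Num.max (Num.floor (alpha t)) (#|S :&: group_of grp t|%:Z) <= b%:Z)%R.

(* s = [e_1; ...; e_k] is a run of the greedy algorithm on I (ties broken
   arbitrarily): each e_{i+1} is an element outside the current set S_i with
   S_i + e_{i+1} in I maximizing the marginal gain among all such elements,
   and the algorithm stops when no feasible element can be added. *)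
Definition greedy_run (f : {set V} -> R) (grp : V -> 'I_m) (alpha beta : 'I_m -> R)
  (b : nat) (s : seq V) : Prop :=
  (forall (s1 s2 : seq V) (ei : V), s = s1 ++ ei :: s2 ->
     let Si := [set x in s1] in
     [/\ ei \notin Si,
         in_I grp alpha beta b (ei |: Si)
       & forall e, e \notin Si -> in_I grp alpha beta b (e |: Si) ->
           f (e |: Si) - f Si <= f (ei |: Si) - f Si]) /\
  (forall e, e \notin [set x in s] -> ~ in_I grp alpha beta b (e |: [set x in s])).
End Defs.

(* Main.v *)
Require Import Defs.
From HB Require Import structures.
From mathcomp Require Import all_boot all_order all_algebra.
From mathcomp Require Import reals sequences.
From mathcomp Require Import zify ring lra.
From mathcomp Require exp.
Import Order.TTheory GRing.Theory Num.Theory.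
Local Open Scope ring_scope.
Set Implicit Arguments. Unset Strict Implicit. Unset Printing Implicit Defensive.

Section Main.
Variables (R : realType) (V : finType) (m : nat) (f : {set V} -> R)
  (grp : V -> 'I_m) (alpha beta : 'I_m -> R) (b : nat) (x : {set V} -> R).
Hypotheses (hf0 : nonneg_fun f) (hfm : monotone_fun f) (hfs : submodular_fun f)
  (halpha : forall t, 0 <= alpha t) (hbeta : forall t, 0 <= beta t)
  (hxf : P0_feasible grp alpha beta b x).

Definition nI (A : {set V}) (t : 'I_m) : int := (#|A :&: group_of grp t|)%:Z.
Definition aa t := Num.floor (alpha t).
Definition cc t := Num.ceil (beta t).
Definition Sig (A : {set V}) : int := \sum_(t < m) Num.max (aa t) (nI A t).

Definition inIb (A : {set V}) : bool :=
  [forall t, nI A t <= cc t] && (Sig A <= b%:Z).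

Lemma inIP (A : {set V}) : reflect (in_I grp alpha beta b A) (inIb A).
Proof.
by apply: (iffP andP) => [[/forallP h1 h2]|[h1 h2]]; split=> //; apply/forallP.
Qed.

Lemma nI_add (e : V) (A : {set V}) t : e \notin A ->
  nI (e |: A) t = if grp e == t then nI A t + 1 else nI A t.
Proof.
move=> eA; rewrite /nI setIUl.
case: eqP => [<-|ne].
  rewrite (setIidPl _); last by rewrite sub1set inE.
  rewrite cardsU1 inE (negbTE eA) /=; lia.
rewrite (_ : [set e] :&: _ = set0) ?set0U //.
by apply/setP=> v; rewrite !inE; apply/negP => /andP[/eqP -> /eqP].
Qed.

Lemma nI_sub (A B : {set V}) t : B \subset A -> nI B t <= nI A t.
Proof. by move=> sBA; rewrite /nI lez_nat subset_leq_card // setSI. Qed.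

Lemma nI_ge0 (A : {set V}) t : 0 <= nI A t.
Proof. by []. Qed.

Lemma inI_sub (A B : {set V}) : in_I grp alpha beta b A -> B \subset A -> in_I grp alpha beta b B.
Proof.
move=> [h1 h2] sBA; split=> [t|].
  exact: le_trans (nI_sub t sBA) (h1 t).
apply: le_trans h2; apply: ler_sum => t _.
rewrite ge_max le_max lexx /= le_max (nI_sub t sBA) orbT //.
Qed.

Lemma max_step (p q : int) : Num.max p (q + 1) <= Num.max p q + 1.
Proof. rewrite !maxEle; do 2 case: ifP; lia. Qed.

Lemma max_step2 (p q : int) : q < p -> Num.max p (q + 1) = Num.max p q.
Proof. rewrite !maxEle; do 2 case: ifP; lia. Qed.

Lemma Sig_add (e : V) (A : {set V}) : e \notin A ->
  Sig (e |: A) = Sig A - Num.max (aa (grp e)) (nI A (grp e))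
                 + Num.max (aa (grp e)) (nI A (grp e) + 1).
Proof.
move=> eA; rewrite /Sig (bigD1 (grp e)) //= [in RHS](bigD1 (grp e)) //=.
rewrite nI_add // eqxx.
rewrite (eq_bigr (fun t => Num.max (aa t) (nI A t))); last first.
  by move=> t /negbTE nt; rewrite nI_add // eq_sym nt.
rewrite addrC; set u := Num.max _ _; set w := Num.max _ _; set z := \sum_(i < m | _) _; lia.
Qed.

Lemma inI_add (e : V) (A : {set V}) : in_I grp alpha beta b A -> e \notin A ->
  nI A (grp e) < cc (grp e) ->
  (nI A (grp e) < aa (grp e) \/ Sig A < b%:Z) -> in_I grp alpha beta b (e |: A).
Proof.
move=> [h1 h2] eA hc hor; split=> [t|].
  change (nI (e |: A) t <= cc t); rewrite nI_add //; case: eqP => [<-|_]; last exact: h1.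
  lia.
change (Sig (e |: A) <= b%:Z); have h2' : Sig A <= b%:Z by []. rewrite Sig_add //.
case: hor => [hlt|hlt].
  by rewrite max_step2 // addrNK.
have := max_step (aa (grp e)) (nI A (grp e)); lia.
Qed.


Lemma x_ge0 (S : {set V}) : (#|S| <= b)%N -> 0 <= x S.
Proof. by case: hxf => h _ _ /h /andP[]. Qed.

Definition wt (e : V) : R := \sum_(S : {set V} | (#|S| <= b)%N) x S * (e \in S)%:R.

Lemma wt_ge0 e : 0 <= wt e.
Proof. by apply: sumr_ge0 => S hS; rewrite mulr_ge0 ?x_ge0. Qed.

Lemma sum_wt (A : {set V}) :
  \sum_(e in A) wt e = \sum_(S : {set V} | (#|S| <= b)%N) x S * (#|S :&: A|)%:R.
Proof.
rewrite exchange_big /=; apply: eq_bigr => S _.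
rewrite -mulr_sumr; congr (_ * _).
rewrite -sum1_card natr_sum big_mkcond [RHS]big_mkcond /=.
by apply: eq_bigr => e _; rewrite !inE; case: (e \in A); case: (e \in S).
Qed.

Lemma card_grp (A : {set V}) : (\sum_(t < m) #|A :&: group_of grp t|)%N = #|A|.
Proof.
rewrite -sum1_card (partition_big grp xpredT) //=; apply: eq_bigr => t _.
by rewrite -sum1_card; apply: eq_bigl => e; rewrite !inE.
Qed.

Definition yy t := \sum_(e in group_of grp t) wt e.

Lemma yy_bounds t : alpha t <= yy t <= beta t.
Proof. by rewrite /yy sum_wt; case: hxf => _ /(_ t) h _. Qed.

Lemma sumx_le1 : \sum_(S : {set V} | (#|S| <= b)%N) x S <= 1.
Proof. by case: hxf. Qed.

Lemma sum_yy : \sum_t yy t <= b%:R.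
Proof.
have -> : \sum_t yy t = \sum_(e in [set: V]) wt e.
  rewrite (partition_big grp xpredT) //=; apply: eq_bigr => t _.
  by apply: eq_bigl => e; rewrite !inE.
rewrite sum_wt.
apply: (@le_trans _ _ (\sum_(S : {set V} | (#|S| <= b)%N) x S * b%:R)).
  apply: ler_sum => S hS; rewrite setIT ler_wpM2l ?x_ge0 // ler_nat //.
rewrite -mulr_suml; have := sumx_le1; have : (0 : R) <= b%:R by [].
move=> h0 h1; rewrite -[X in _ <= X]mul1r ler_wpM2r //.
Qed.

Lemma aa_le t : (aa t)%:~R <= yy t.
Proof. by apply: le_trans (floor_le _) _; case/andP: (yy_bounds t). Qed.

Lemma yy_le_cc t : yy t <= (cc t)%:~R.
Proof. by apply: le_trans (ceil_ge _); case/andP: (yy_bounds t). Qed.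

Lemma aa_ge0 t : 0 <= aa t.
Proof. by rewrite /aa floor_ge0. Qed.

Lemma aa_le_cc t : aa t <= cc t.
Proof. by rewrite -(ler_int R); apply: le_trans (aa_le t) (yy_le_cc t). Qed.

Definition Bs (A : {set V}) := [set e | (e \notin A) && ~~ inIb (e |: A)].

Lemma blocked (A : {set V}) e : in_I grp alpha beta b A -> e \in Bs A ->
  (cc (grp e) <= nI A (grp e)) || ((aa (grp e) <= nI A (grp e)) && (b%:Z <= Sig A)).
Proof.
move=> hA; rewrite inE => /andP[eA /inIP nI'].
have [//|h1] := leP (cc (grp e)) (nI A (grp e)).
have [h2|h2] := leP (aa (grp e)) (nI A (grp e)).
  have [//|h3] := leP (b%:Z) (Sig A).
  by exfalso; apply: nI'; apply: inI_add => //; right.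
by exfalso; apply: nI'; apply: inI_add => //; left.
Qed.

Lemma mass_bound (A : {set V}) : in_I grp alpha beta b A ->
  \sum_(e in Bs A) wt e <= #|A|%:R.
Proof.
move=> hA.
pose blkb t := (cc t <= nI A t) || ((aa t <= nI A t) && (b%:Z <= Sig A)).
rewrite (partition_big grp xpredT) //=.
apply: (@le_trans _ _ (\sum_t (if blkb t then yy t else 0))).
  apply: ler_sum => t _; case: ifP => hb.
    rewrite /yy big_mkcond [X in _ <= X]big_mkcond /=; apply: ler_sum => e _.
    rewrite [e \in group_of _ _]inE.
    by case: (grp e == t); rewrite ?andbT ?andbF /=; case: (e \in Bs A); rewrite ?lexx ?wt_ge0.
  rewrite big1 // => e /andP[eB /eqP ge]; move: (blocked hA eB); rewrite ge.
  by rewrite /blkb in hb; rewrite hb.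
apply: (@le_trans _ _ (\sum_t ((nI A t)%:~R +
   (if (b%:Z <= Sig A) then yy t - (Num.max (aa t) (nI A t))%:~R else 0)))).
  apply: ler_sum => t _.
  have h1 := aa_le t; have h2 := yy_le_cc t; have h3 : (0:R) <= (nI A t)%:~R by [].
  have h4 : ((aa t)%:~R : R) <= (cc t)%:~R by rewrite ler_int aa_le_cc.
  rewrite /blkb; rewrite maxEle.
  case: (leP (cc t) (nI A t)) => hc /=;
  case: (leP (aa t) (nI A t)) => ha /=;
  case: (leP (b%:Z) (Sig A)) => hs /=;
  move: hc ha; rewrite -?(ler_int R) -?(ltr_int R) => hc ha; lra.
rewrite big_split /=.
have -> : \sum_t ((nI A t)%:~R : R) = #|A|%:R.
  by rewrite -card_grp natr_sum.
rewrite -[X in _ <= X]addr0 lerD2l.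
case: (leP (b%:Z) (Sig A)) => hs; last by rewrite big1.
rewrite sumrB -rmorph_sum -/(Sig A); have := sum_yy.
move: hs; rewrite -(ler_int R) => hs; lra.
Qed.


Lemma submod_step (A B : {set V}) e : A \subset B -> e \notin B ->
  f (e |: B) - f B <= f (e |: A) - f A.
Proof.
move=> sAB eB; have := hfs (e |: A) B.
have -> : (e |: A) :|: B = e |: B by rewrite -setUA (setUidPr sAB).
have -> : (e |: A) :&: B = A.
  rewrite setIUl (setIidPl sAB).
  have -> : [set e] :&: B = set0.
    by apply/setP=> v; rewrite !inE; case: eqP => // ->; rewrite (negbTE eB).
  by rewrite set0U.
move=> h; lra.
Qed.

Lemma union_bound (G A : {set V}) : (forall e, e \in A -> e \notin G) ->
  f (A :|: G) <= f G + \sum_(e in A) (f (e |: G) - f G).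
Proof.
move: {2}#|A| (erefl #|A|) => n; elim: n A => [|n IH] A hA hd.
  move/eqP: hA; rewrite cards_eq0 => /eqP ->; rewrite set0U big_set0 addr0 //.
have [a aA] : exists a, a \in A by apply/set0Pn; rewrite -card_gt0 hA.
rewrite (big_setD1 a aA) /=.
have hA' : #|A :\ a| = n by move: hA; rewrite (cardsD1 a A) aA; case.
have hd' : forall e, e \in A :\ a -> e \notin G.
  by move=> e; rewrite inE => /andP[_ /hd].
have := IH _ hA' hd'.
have -> : A :|: G = a |: ((A :\ a) :|: G) by rewrite setUA setD1K.
have := @submod_step G ((A :\ a) :|: G) a (subsetUr _ _).
rewrite !inE eqxx /= (negbTE (hd a aA)) /= => /(_ isT) h1 h2; lra.
Qed.

Variables (s : seq V).
Hypothesis hs : greedy_run f grp alpha beta b s.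

Definition G j := [set v in take j s].
Definition d j := f (G j.+1) - f (G j).

Lemma G0 : G 0 = set0.
Proof. by apply/setP => v; rewrite !inE take0. Qed.

Lemma Gk j : (size s <= j)%N -> G j = [set v in s].
Proof. by move=> h; rewrite /G take_oversize. Qed.

Lemma step j : (j < size s)%N -> exists e, [/\ e \notin G j, G j.+1 = e |: G j,
  in_I grp alpha beta b (G j.+1) &
  forall e', e' \notin G j -> in_I grp alpha beta b (e' |: G j) ->
     f (e' |: G j) - f (G j) <= d j].
Proof.
move=> hj; have x0 : V by case: (s) hj => [|y] //.
set e := nth x0 s j.
have hsp : s = take j s ++ e :: drop j.+1 s.
  by rewrite -[s in LHS](cat_take_drop j) (drop_nth x0 hj).
have hG : G j.+1 = e |: G j.
  by rewrite /G (take_nth x0 hj); apply/setP => v; rewrite !inE mem_rcons in_cons.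
case: (hs.1 _ _ _ hsp) => h1 h2 h3.
by exists e; rewrite /d hG; split.
Qed.

Lemma G_sub j : G j \subset G j.+1.
Proof.
case: (ltnP j (size s)) => hj.
  by case: (step hj) => e [_ -> _ _]; apply: subsetUr.
by rewrite !Gk // (leq_trans hj).
Qed.

Lemma d_ge0 j : 0 <= d j.
Proof. by rewrite /d subr_ge0; apply: hfm; apply: G_sub. Qed.

Lemma inI0 : in_I grp alpha beta b set0.
Proof.
split=> [t|].
  change (nI set0 t <= cc t); rewrite /nI set0I cards0 /cc ceil_ge0.
  by apply: lt_le_trans (hbeta t); rewrite ltrN10.
change (Sig set0 <= b%:Z); rewrite /Sig.
rewrite (eq_bigr aa); last first.
  by move=> t _; rewrite /nI set0I cards0 max_l // aa_ge0.
rewrite -(ler_int R) rmorph_sum /=.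
apply: le_trans sum_yy; apply: ler_sum => t _; exact: aa_le.
Qed.

Lemma G_inI j : (j <= size s)%N -> in_I grp alpha beta b (G j).
Proof.
case: j => [|j] hj; first by rewrite G0; exact: inI0.
by case: (step hj) => e [].
Qed.

Lemma d_mono j : (j < size s)%N -> d j.+1 <= d j.
Proof.
move=> hj; case: (ltnP j.+1 (size s)) => hj1; last first.
  have -> : d j.+1 = 0 by rewrite /d !Gk ?subrr // ltnW.
  exact: d_ge0.
case: (step hj1) => e' [h1 h2 h3 _].
case: (step hj) => e [_ _ _ h4].
have e'G : e' \notin G j by apply: contra h1; apply: (subsetP (G_sub j)).
have := h4 e' e'G (inI_sub h3 _).
rewrite h2 setUS ?G_sub // => /(_ isT) h5.
have := @submod_step (G j) (G j.+1) e' (G_sub j) h1.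
rewrite /d -h2 => h6; move: h5; rewrite -/(d j) => h5; lra.
Qed.

Definition Ssum j := \sum_e (if e \in Bs (G j) then wt e * (f (e |: G j) - f (G j)) else 0).
Definition Msum j := \sum_(e in Bs (G j)) wt e.

Lemma Bs_mono j : (j < size s)%N -> Bs (G j) \subset Bs (G j.+1).
Proof.
move=> hj; case: (step hj) => e0 [h1 h2 h3 _].
apply/subsetP => e; rewrite /Bs in_set; case/andP => eG hI; rewrite in_set.
have ne : e != e0.
  apply/negP => /eqP he; move: hI; rewrite he => /negP; apply; apply/inIP; rewrite -h2 //.
apply/andP; split.
  by rewrite h2 in_setU1 negb_or ne eG.
apply: contra hI => /inIP hI; apply/inIP; apply: inI_sub hI _.
by rewrite setUS // G_sub.
Qed.

Lemma inv j : (j <= size s)%N -> Ssum j + (#|G j|%:R - Msum j) * d j <= f (G j) - f set0.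
Proof.
elim: j => [_|j IH hj].
  have hM : Msum 0 = 0.
    apply/eqP; rewrite eq_le; apply/andP; split; last by apply: sumr_ge0 => e _; exact: wt_ge0.
    by rewrite /Msum; move: (mass_bound (G_inI (leq0n (size s)))); rewrite !G0 cards0.
  have hS : Ssum 0 = 0.
    rewrite /Ssum big1 // => e _; case: ifP => // eB.
    by rewrite (psumr_eq0P (fun e _ => wt_ge0 e) hM eB) mul0r.
  by rewrite hS hM G0 cards0 subrr mul0r addr0 subrr.
have hj' : (j < size s)%N by [].
have IH' := IH (ltnW hj).
case: (step hj') => e0 [h1 h2 h3 h4].
have hmono := Bs_mono hj'.
have hcard : #|G j.+1|%:R = #|G j|%:R + (1 : R).
  by rewrite h2 cardsU1 h1 natrD addrC.
have hmass := mass_bound (G_inI hj).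
have hd := d_mono hj'.
have hd0 := d_ge0 j.+1.
have hS : Ssum j.+1 <= Ssum j + (Msum j.+1 - Msum j) * d j.
  rewrite /Msum !(big_mkcond (fun e => e \in Bs _)) /= -sumrB mulr_suml /Ssum -big_split /=.
  apply: ler_sum => e _.
  have hw := wt_ge0 e.
  case eB: (e \in Bs (G j)).
    rewrite (subsetP hmono _ eB) subrr mul0r addr0.
    apply: ler_wpM2l => //; apply: submod_step; first exact: G_sub.
    by move: (subsetP hmono _ eB); rewrite inE => /andP[].
  case eB': (e \in Bs (G j.+1)); last by rewrite subrr mul0r addr0.
  rewrite add0r subr0.
  move: eB'; rewrite inE => /andP[eG' _].
  have eG : e \notin G j by apply: contra eG'; apply: (subsetP (G_sub j)).
  have hI : in_I grp alpha beta b (e |: G j).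
    by move: eB; rewrite inE eG /= => /negbFE /inIP.
  have := h4 e eG hI; have := @submod_step (G j) (G j.+1) e (G_sub j) eG'.
  move=> ha hb; apply: ler_wpM2l => //; lra.
have hfG : f (G j.+1) - f set0 = f (G j) - f set0 + d j by rewrite /d; ring.
rewrite hfG.
have hpos : 0 <= (#|G j.+1|%:R - Msum j.+1) * (d j - d j.+1).
  apply: mulr_ge0; rewrite subr_ge0.
  exact: hmass. exact: hd.
move: hpos IH' hS; rewrite hcard; nra.
Qed.


Lemma final_bound : P0_value f b x <= 2 * f [set v in s].
Proof.
set k := size s.
have hGk : G k = [set v in s] by rewrite Gk.
rewrite -hGk.
have hB : forall e, (e \in Bs (G k)) = (e \notin G k).
  move=> e; rewrite /Bs in_set; case eG: (e \in G k) => //=.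
  by apply/negP => /inIP; rewrite hGk; apply: hs.2; rewrite -hGk eG.
have hdk : d k = 0 by rewrite /d !Gk // subrr.
have hinv := inv (leqnn k); rewrite hdk mulr0 addr0 in hinv.
have hSk : Ssum k = \sum_(S : {set V} | (#|S| <= b)%N)
                      x S * \sum_(e in S :\: (G k)) (f (e |: (G k)) - f (G k)).
  rewrite /Ssum.
  under [RHS]eq_bigr => S _ do rewrite big_mkcond mulr_sumr.
  rewrite exchange_big /=; apply: eq_bigr => v _.
  rewrite hB; case: ifP => eG.
    rewrite /wt mulr_suml; apply: eq_bigr => S _.
    by rewrite in_setD eG /=; case: (v \in S); rewrite ?mulr1 ?mul1r ?mulr0 ?mul0r.
  by rewrite big1 // => S _; rewrite in_setD eG /= mulr0.
rewrite hSk in hinv.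
have hfG0 := hf0 (G k); have hf00 := hf0 set0.
rewrite /P0_value.
apply: (@le_trans _ _ (\sum_(S : {set V} | (#|S| <= b)%N)
      (x S * f (G k) + x S * \sum_(e in S :\: (G k)) (f (e |: (G k)) - f (G k))))).
  apply: ler_sum => S hS; rewrite -mulrDr; apply: ler_wpM2l; first exact: x_ge0.
  apply: (@le_trans _ _ (f ((S :\: (G k)) :|: (G k)))).
    apply: hfm; apply/subsetP => v vS; rewrite in_setU in_setD vS; by case: (v \in (G k)).
  by apply: union_bound => e; rewrite in_setD => /andP[].
rewrite big_split /= -mulr_suml.
have h1 := sumx_le1.
have h2 : (\sum_(S : {set V} | (#|S| <= b)%N) x S) * f (G k) <= f (G k).
  by rewrite -[X in _ <= X]mul1r ler_wpM2r.
lra.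
Qed.


Lemma claims : [/\ (#|[set v in s]| <= b)%N,
      (forall t : 'I_m,
         Num.floor (alpha t) <= (#|[set v in s] :&: group_of grp t|)%:Z <= Num.ceil (beta t))
    & (1 - (expR 1)^-1) ^+ 2 / 2 * P0_value f b x <= f [set v in s]].
Proof.
have hI := G_inI (leqnn (size s)); rewrite Gk // in hI.
set A := [set v in s] in hI *.
split.
- rewrite -(ler_nat R) -card_grp natr_sum.
  apply: (@le_trans _ _ (\sum_t ((Num.max (aa t) (nI A t))%:~R : R))).
    apply: ler_sum => t _; change ((nI A t)%:~R <= (Num.max (aa t) (nI A t))%:~R :> R).
    by rewrite ler_int le_max lexx orbT.
  rewrite -rmorph_sum -/(Sig A) /=.
  have : Sig A <= b%:Z by case: hI.
  by rewrite -(ler_int R).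
- move=> t; apply/andP; split; last by case: hI => h _; exact: h.
  rewrite leNgt; apply/negP => hlt.
  have hV : aa t <= #|group_of grp t|%:Z.
    rewrite -(ler_int R); apply: le_trans (aa_le t) _.
    rewrite /yy sum_wt.
    apply: (@le_trans _ _ (\sum_(S : {set V} | (#|S| <= b)%N) x S * #|group_of grp t|%:R)).
      apply: ler_sum => S hS; apply: ler_wpM2l; first exact: x_ge0.
      by rewrite ler_nat subset_leq_card // subsetIr.
    rewrite -mulr_suml; have := sumx_le1; move=> h1.
    by rewrite -[X in _ <= X]mul1r ler_wpM2r.
  have : ~~ (group_of grp t \subset A).
    apply/negP => sub; have := subset_leq_card (_ : group_of grp t \subset A :&: group_of grp t).
    rewrite subsetI sub subxx => /(_ isT) hc.
    move: hlt hV; rewrite -/(aa t) -/(nI A t) /nI; lia.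
  case/subsetPn => e eV eA.
  have ge : grp e = t by move: eV; rewrite inE => /eqP.
  apply: (hs.2 e eA); apply: inI_add => //; rewrite ge.
    by apply: lt_le_trans hlt (aa_le_cc t).
  by left.
- have hP := final_bound.
  have hfA := hf0 A.
  have he : 2 <= expR 1 :> R by have := exp.expR_ge1Dx (1 : R); lra.
  have hu : 0 < (expR 1)^-1 :> R by rewrite invr_gt0; lra.
  have hue : (expR 1)^-1 * expR 1 = 1 :> R by rewrite mulVf //; apply/eqP => h; lra.
  set u := (expR 1)^-1 in hu hue *.
  have hu1 : u <= 1 by nra.
  set c := (1 - u) ^+ 2 / 2.
  have hc0 : 0 <= c by rewrite /c mulr_ge0 // ?sqr_ge0 // invr_ge0.
  have hc1 : c <= 1/2.
    rewrite /c ler_pM2r ?invr_gt0 //; first by nra.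
  have := ler_wpM2l hc0 hP.
  nra.
Qed.

End Main.

Theorem theorem2 (R : realType) (V : finType) (m : nat)
  (f : {set V} -> R) (grp : V -> 'I_m) (alpha beta : 'I_m -> R) (b : nat)
  (hf0 : nonneg_fun f) (hfm : monotone_fun f) (hfs : submodular_fun f)
  (halpha : forall t, 0 <= alpha t) (hbeta : forall t, 0 <= beta t)
  (hb : (0 < b)%N)
  (x : {set V} -> R) (hx : P0_optimal f grp alpha beta b x)
  (s : seq V) (hs : greedy_run f grp alpha beta b s) :
  let Ag := [set v in s] in
  [/\ (#|Ag| <= b)%N,
      (forall t : 'I_m,
         Num.floor (alpha t) <= (#|Ag :&: group_of grp t|)%:Z <= Num.ceil (beta t))
    & (1 - (expR 1)^-1) ^+ 2 / 2 * P0_value f b x <= f Ag].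
Proof.
exact: (claims hf0 hfm hfs halpha hbeta hx.1 hs).
Qed.
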